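(* Let $X=\{x_1,\ldots,x_n\}$, $S=K[x_1,\ldots,x_n]$ over a field $K$, and let $F_1,\ldots,F_s\subset X$ be pairwise disjoint with $|F_i|=k>1$ for all $i$. Let $f_1,\ldots,f_{k^s}$ be the minimal monomial generators of $P_{F_1}\cdots P_{F_s}$, ordered (decreasingly) with respect to the lexicographic order with $x_1>x_2>\cdots>x_n$. For $i=2,\ldots,k^s$ let $n_i$ be the minimal number of homogeneous generators of $(f_1,\ldots,f_{i-1}):(f_i)$. Then $$\max\{n_i:i=2,\ldots,k^s\}=n_{k^s}=(k-1)s.$$ Moreover, for all $i$, the colon ideal $(f_1,\ldots,f_{i-1}):(f_i)$ is generated by linear forms.
   Context: For $F\subseteq X$, $P_F=(x_i:x_i\in F)\subset S$. *)

(* Defs.v *)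
From HB Require Import structures.
From mathcomp Require Import all_boot all_order all_algebra.
From mathcomp.multinomials Require Import mpoly.
Set Implicit Arguments. Unset Strict Implicit. Unset Printing Implicit Defensive.
Import GRing.Theory.
Local Open Scope ring_scope.

Section Ideals.
Variables (K : fieldType) (n : nat).
Local Notation S := {mpoly K[n]}.

Definition in_ideal (gs : seq S) (p : S) : Prop :=
  exists cs : seq S, size cs = size gs /\
    p = \sum_(j < size gs) cs`_j * gs`_j.

Definition gen_ideal (G : S -> Prop) (p : S) : Prop :=
  exists gs : seq S, (forall g, g \in gs -> G g) /\ in_ideal gs p.

Definition generates (gs : seq S) (I : S -> Prop) : Prop :=
  forall p, I p <-> in_ideal gs p.

Definition colon (I : S -> Prop) (f : S) (p : S) : Prop := I (p * f).

Definition homogeneous (p : S) : Prop := exists d : nat, p \is d.-homog.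

Definition min_num_homog_gens (I : S -> Prop) (m : nat) : Prop :=
  (exists gs : seq S, size gs = m /\ (forall g, g \in gs -> homogeneous g)
                      /\ generates gs I) /\
  (forall gs : seq S, (forall g, g \in gs -> homogeneous g) ->
                      generates gs I -> (m <= size gs)%N).

Definition gen_by_linear_forms (I : S -> Prop) : Prop :=
  exists gs : seq S, (forall g, g \in gs -> g \is 1.-homog) /\ generates gs I.

Definition PF (F : {set 'I_n}) : S -> Prop :=
  gen_ideal (fun p => exists2 i, i \in F & p = 'X_i).

Definition prod_ideal (s : nat) (I : 'I_s -> S -> Prop) : S -> Prop :=
  gen_ideal (fun p => exists g : 'I_s -> S,
                (forall i, I i (g i)) /\ p = \prod_(i < s) g i).

Definition mdivides (m1 m2 : 'X_{1..n}) : bool := [forall i, m1 i <= m2 i]%N.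

Definition min_monomial_gen (I : S -> Prop) (m : 'X_{1..n}) : Prop :=
  I 'X_[m] /\ (forall m' : 'X_{1..n}, I 'X_[m'] -> mdivides m' m -> m' = m).

(* Strict lexicographic order with x_1 > x_2 > ... > x_n
   (variable index 0 is the largest): lex_gt m1 m2 <=> x^m1 >_lex x^m2. *)
Definition lex_gt (m1 m2 : 'X_{1..n}) : bool :=
  [exists i : 'I_n, (m2 i < m1 i)%N &&
     [forall j : 'I_n, (j < i)%N ==> (m1 j == m2 j)]].

End Ideals.

(* Main.v *)
Require Import Defs.
From HB Require Import structures.
From mathcomp Require Import all_boot all_order all_algebra.
From mathcomp.multinomials Require Import mpoly.
Module M_A.
Set Implicit Arguments. Unset Strict Implicit. Unset Printing Implicit Defensive.
Import GRing.Theory.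
Local Open Scope ring_scope.

Section Gen.
Variables (K : fieldType) (n : nat).
Local Notation S := {mpoly K[n]}.
Implicit Types (p q c : S) (gs : seq S).

Lemma in_ideal0 gs : in_ideal gs 0.
Proof.
exists (nseq (size gs) 0); rewrite size_nseq; split=> //.
by rewrite big1 // => j _; rewrite nth_nseq if_same mul0r.
Qed.

Lemma in_idealD gs p q : in_ideal gs p -> in_ideal gs q -> in_ideal gs (p + q).
Proof.
move=> [c1 [s1 ->]] [c2 [s2 ->]].
exists (mkseq (fun i => c1`_i + c2`_i) (size gs)); rewrite size_mkseq; split=> //.
by rewrite -big_split /=; apply: eq_bigr => j _; rewrite nth_mkseq // mulrDl.
Qed.

Lemma in_idealM gs c p : in_ideal gs p -> in_ideal gs (c * p).
Proof.
move=> [c1 [s1 ->]].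
exists (mkseq (fun i => c * c1`_i) (size gs)); rewrite size_mkseq; split=> //.
by rewrite mulr_sumr; apply: eq_bigr => j _; rewrite nth_mkseq // mulrA.
Qed.

Lemma in_ideal_gen gs g : g \in gs -> in_ideal gs g.
Proof.
move=> gin.
have hi : (index g gs < size gs)%N by rewrite index_mem.
exists (mkseq (fun i => ((i == index g gs) : nat)%:R) (size gs)); rewrite size_mkseq; split=> //.
rewrite (bigD1 (Ordinal hi)) //= big1 ?addr0.
  by rewrite nth_mkseq // eqxx mul1r nth_index.
move=> j /negbTE hj; rewrite nth_mkseq //.
have -> : (nat_of_ord j == index g gs) = false.
  by apply/negbTE; apply: contraFN hj => /eqP e; apply/eqP/val_inj.
by rewrite mul0r.
Qed.

Lemma in_ideal_sum gs (I : Type) (r : seq I) (P : pred I) (F : I -> S) :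
  (forall i, P i -> in_ideal gs (F i)) -> in_ideal gs (\sum_(i <- r | P i) F i).
Proof.
move=> h; apply: (big_ind (in_ideal gs)) => //; [exact: in_ideal0 | exact: in_idealD].
Qed.

Definition Qp (P : 'X_{1..n} -> Prop) p := forall m, m \in msupp p -> P m.
Definition upc (P : 'X_{1..n} -> Prop) := forall m m', P m -> P (m' + m)%MM.

Lemma Qp0 P : Qp P 0.
Proof. by move=> m; rewrite msupp0. Qed.

Lemma QpD P p q : Qp P p -> Qp P q -> Qp P (p + q).
Proof.
by move=> hp hq m /msuppD_le; rewrite mem_cat => /orP[/hp|/hq].
Qed.

Lemma QpM P c p : upc P -> Qp P p -> Qp P (c * p).
Proof.
move=> hu hp m /msuppM_le /allpairsP [[m1 m2] /= [_ h2 ->]].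
exact/hu/hp.
Qed.

Lemma QpX P u : Qp P 'X_[u] <-> P u.
Proof.
split; first by apply; rewrite msuppX mem_seq1.
by move=> h m; rewrite msuppX mem_seq1 => /eqP ->.
Qed.

Lemma Qp_in_ideal P gs p : upc P -> (forall g, g \in gs -> Qp P g) ->
  in_ideal gs p -> Qp P p.
Proof.
move=> hu hg [cs [_ ->]].
apply: (big_ind (Qp P)); [exact: Qp0 | exact: QpD |].
move=> j _; apply: QpM => //; apply: hg; exact: mem_nth.
Qed.

Lemma in_ideal_mono gs p :
  (forall m, m \in msupp p -> exists u, 'X_[u] \in gs /\ (u <= m)%MM) ->
  in_ideal gs p.
Proof.
move=> h; rewrite (mpolyE p) big_seq_cond; apply: in_ideal_sum => m /andP[hm _].
have [u [hu hle]] := h m hm.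
have -> : ('X_[m] : S) = 'X_[m - u] * 'X_[u] by rewrite -mpolyXD submK.
by rewrite scalerAl -mul_mpolyC; apply: in_idealM; apply: in_ideal_gen.
Qed.

Lemma in_idealP (I : eqType) (g : I -> 'X_{1..n}) (r : seq I) p :
  in_ideal [seq 'X_[g j] | j <- r] p <->
  (forall m, m \in msupp p -> has (fun j => g j <= m)%MM r).
Proof.
split.
  apply: Qp_in_ideal.
    move=> m m' /hasP [j jr hj]; apply/hasP; exists j => //.
    exact: lepm_trans hj (lem_addl _ _).
  move=> _ /mapP [j jr ->]; apply/QpX; apply/hasP; exists j => //; exact: lepm_refl.
move=> h; apply: in_ideal_mono => m /h /hasP [j jr hj]; exists (g j); split=> //.
exact: map_f.
Qed.

End Gen.

End M_A.
Import M_A.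

Module M_B.
Set Implicit Arguments. Unset Strict Implicit. Unset Printing Implicit Defensive.

Section Lex.
Variable n : nat.
Implicit Types m : 'X_{1..n}.

Lemma lex_gt_irr : irreflexive (@lex_gt n).
Proof. by move=> m; apply/existsP => -[i /andP[]]; rewrite ltnn. Qed.

Lemma lex_gt_trans : transitive (@lex_gt n).
Proof.
move=> m2 m1 m3 /existsP [i /andP [h1 /forallP e1]] /existsP [j /andP [h2 /forallP e2]].
apply/existsP; case: (ltngtP i j) => hij.
- exists i; apply/andP; split.
    by have := e2 i; rewrite hij /= => /eqP <-.
  apply/forallP => l; apply/implyP => hl.
  have := e1 l; rewrite hl /= => /eqP ->.
  by have := e2 l; rewrite (ltn_trans hl hij) /=.
- exists j; apply/andP; split.
    by have := e1 j; rewrite hij /= => /eqP ->.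
  apply/forallP => l; apply/implyP => hl.
  have := e1 l; rewrite (ltn_trans hl hij) /= => /eqP ->.
  by have := e2 l; rewrite hl /=.
- have eij : i = j by apply/val_inj.
  subst j; exists i; apply/andP; split; first exact: ltn_trans h2 h1.
  apply/forallP => l; apply/implyP => hl.
  have := e1 l; rewrite hl /= => /eqP ->.
  by have := e2 l; rewrite hl /=.
Qed.

End Lex.

Section Comb.
Variables (n s : nat) (F : 'I_s -> {set 'I_n}).
Hypothesis hdis : forall i j, i != j -> [disjoint F i & F j].

Definition mono (a : 'I_s -> 'I_n) : 'X_{1..n} := (\sum_(i < s) U_(a i))%MM.
Definition isTm (m : 'X_{1..n}) := exists a, (forall i, a i \in F i) /\ m = mono a.

Lemma Funiq i i' j : j \in F i -> j \in F i' -> i = i'.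
Proof.
move=> h1 h2; apply/eqP; apply/negPn/negP => /hdis hd.
by rewrite (disjointFr hd h1) in h2.
Qed.

Lemma monoE a l : (forall i, a i \in F i) -> mono a l = [exists i, a i == l].
Proof.
move=> ha; rewrite /mono mnm_sumE; case: existsP => [[i0 /eqP e]|ne].
  rewrite (bigD1 i0) //= mnm1E e eqxx big1 // => i hi; rewrite mnm1E.
  case: eqP => // e'; move: hi; have hai : a i \in F i0 by rewrite e' -e.
  by rewrite (Funiq (ha i) hai) eqxx.
rewrite big1 // => i _; rewrite mnm1E; case: eqP => // e; case: ne; by exists i; apply/eqP.
Qed.

Definition swap (a : 'I_s -> 'I_n) i0 j := fun i => if i == i0 then j else a i.

Lemma swapF a i0 j : (forall i, a i \in F i) -> j \in F i0 -> forall i, swap a i0 j i \in F i.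
Proof. by move=> ha hj i; rewrite /swap; case: eqP => [->|]. Qed.

Lemma swapE a i0 j l : (forall i, a i \in F i) -> j \in F i0 ->
  mono (swap a i0 j) l = ((l == j) || (l != a i0) && [exists i, a i == l]).
Proof.
move=> ha hj; rewrite monoE; last exact: swapF.
congr nat_of_bool; apply/existsP/idP.
  move=> [i]; rewrite /swap; case: (i =P i0) => [_ /eqP ->|ne /eqP e]; first by rewrite eqxx.
  apply/orP; right; apply/andP; split; last by apply/existsP; exists i; rewrite e.
  apply/eqP => e'; apply: ne; apply: (Funiq (ha i)); by rewrite e e'.
case/orP => [/eqP ->|/andP [ne /existsP [i /eqP e]]].
  by exists i0; rewrite /swap eqxx.
exists i; rewrite /swap; case: (i =P i0) => [ei|_]; last by rewrite e.
by move: ne; rewrite -e ei eqxx.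
Qed.

End Comb.

End M_B.
Import M_B.

Module M_C.
Set Implicit Arguments. Unset Strict Implicit. Unset Printing Implicit Defensive.
Import GRing.Theory.
Local Open Scope ring_scope.

Section Main.
Variables (K : fieldType) (n s : nat) (F : 'I_s -> {set 'I_n}).
Hypothesis hdis : forall i j, i != j -> [disjoint F i & F j].
Local Notation S := {mpoly K[n]}.
Local Notation I := (@prod_ideal K n s (fun i => @PF K n (F i))).

Definition Pi i (m : 'X_{1..n}) := exists2 j, j \in F i & m j != 0%N.
Definition Pall (m : 'X_{1..n}) := forall i, Pi i m.

Lemma upcPi i : upc (Pi i).
Proof. by move=> m m' [j hj hm]; exists j => //; rewrite mnmDE addn_eq0 negb_and hm orbT. Qed.

Lemma Qp_prod i (g : 'I_s -> S) : Qp (Pi i) (g i) -> Qp (Pi i) (\prod_(i < s) g i).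
Proof.
move=> h; rewrite (bigD1 i) //= mulrC; apply: QpM => //; exact: upcPi.
Qed.

Lemma QpPF i p : @PF K n (F i) p -> Qp (Pi i) p.
Proof.
move=> [gs [hg hp]]; apply: Qp_in_ideal hp; first exact: upcPi.
move=> g /hg [j hj ->]; apply/QpX; exists j => //; by rewrite mnm1E eqxx.
Qed.

Lemma Pall_ex m : Pall m -> exists a, (forall i, a i \in F i) /\ (mono a <= m)%MM.
Proof.
move=> h; have h' : forall i, exists j, (j \in F i) && (m j != 0%N).
  by move=> i; case: (h i) => j h1 h2; exists j; rewrite h1.
have [a ha] := fin_all_exists h'.
exists a; split; first by move=> i; case/andP: (ha i).
apply/mnm_lepP => l; rewrite (monoE hdis) //; last by move=> i; case/andP: (ha i).
case: existsP => [[i /eqP <-]|] //=; by rewrite lt0n; case/andP: (ha i).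
Qed.

Lemma Pall_mono a : (forall i, a i \in F i) -> Pall (mono a).
Proof.
move=> ha i; exists (a i) => //; rewrite (monoE hdis) //.
suff -> : [exists i0, a i0 == a i] by [].
by apply/existsP; exists i.
Qed.

Lemma IXP m : I 'X_[m] <-> Pall m.
Proof.
split.
  move=> [gs [hg hp]] i; apply/(QpX K (Pi i)) => //.
  apply: Qp_in_ideal hp; first exact: upcPi.
  move=> g /hg [gi [hgi ->]]; apply: Qp_prod; exact: QpPF.
move=> /Pall_ex [a [ha hle]].
exists [:: 'X_[mono a]]; split.
  move=> g; rewrite mem_seq1 => /eqP ->.
  exists (fun i => 'X_(a i)); split.
    move=> i; exists [:: 'X_(a i)]; split.
      by move=> g'; rewrite mem_seq1 => /eqP ->; exists (a i).
    by apply: in_ideal_gen; rewrite mem_seq1.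
  by rewrite mprodXE.
have -> : ('X_[m] : S) = 'X_[m - mono a] * 'X_[mono a] by rewrite -mpolyXD submK.
by apply: in_idealM; apply: in_ideal_gen; rewrite mem_seq1.
Qed.

Lemma Pall_min a m : (forall i, a i \in F i) -> Pall m -> (m <= mono a)%MM -> m = mono a.
Proof.
move=> ha hm /mnm_lepP hle; apply/mnmP => l.
have := hle l; rewrite (monoE hdis) //.
case: existsP => [[i /eqP <-]|ne] /=; last by case: (m l).
case: (hm i) => j hj hmj.
have : mono a j != 0%N by apply: contraNneq hmj => e; have := hle j; rewrite e; case: (m j).
rewrite (monoE hdis) //; case: existsP => [[i' /eqP e]|] //= _.
have ei : i' = i by apply: (Funiq hdis (ha i')); rewrite e.
move: hmj; rewrite -e ei; case: (m (a i)) => // -[|//] _ _ //.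
Qed.

Lemma mingenP m : min_monomial_gen I m <-> isTm F m.
Proof.
split.
  move=> [/IXP hI hmin].
  have [a [ha hle]] := Pall_ex hI.
  exists a; split => //; symmetry; apply: hmin.
    by apply/IXP; apply: Pall_mono.
  by apply/forallP => l; apply: (mnm_lepP hle).
move=> [a [ha ->]]; split; first by apply/IXP; apply: Pall_mono.
move=> m' /IXP hm' /forallP hd; apply: Pall_min => //; exact/mnm_lepP.
Qed.

End Main.

End M_C.
Import M_C.

Module M_E.
Set Implicit Arguments. Unset Strict Implicit. Unset Printing Implicit Defensive.
Import GRing.Theory.
Local Open Scope ring_scope.

Section LA.
Variables (K : fieldType) (n : nat).
Local Notation S := {mpoly K[n]}.

Lemma mcoeffMXU (c : S) m l : m != 0%MM -> (c * 'X_[m])@_U_(l) = ('X_[m] : S)@_U_(l) * c@_0%MM.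
Proof.
move=> hm; rewrite mcoeffX; case: (m =P U_(l)%MM) => [->|ne] /=.
  by rewrite -{1}[U_(l)%MM]addm0 mcoeffMX mul1r.
rewrite mul0r; apply: memN_msupp_eq0; apply/negP.
rewrite (perm_mem (msuppMX _ _)) => /mapP [m' hm' e].
have : mdeg U_(l)%MM = (mdeg m + mdeg m')%N by rewrite e mdegD.
rewrite mdeg1; case E1: (mdeg m) => [|[|d]] //.
  by move: hm; rewrite -mdeg_eq0 E1.
move=> [] /esym /eqP; rewrite mdeg_eq0 => /eqP em.
by move: e; rewrite em addm0 => /esym.
Qed.

Lemma mcoeffMU (c g : S) l : g@_0%MM = 0 -> (c * g)@_U_(l) = c@_0%MM * g@_U_(l).
Proof.
move=> h0; rewrite {1}(mpolyE g) mulr_sumr raddf_sum /=.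
rewrite [X in _ = _ * mcoeff _ X](mpolyE g) raddf_sum mulr_sumr /=.
rewrite big_seq [in RHS]big_seq; apply: eq_bigr => m hm.
rewrite -scalerAr mcoeffZ mcoeffMXU; last first.
  by apply: contraTneq hm => ->; rewrite mcoeff_msupp h0 eqxx.
by rewrite mcoeffZ mulrA [RHS]mulrC.
Qed.

Lemma LA (V : {set 'I_n}) (gs : seq S) :
  generates gs (in_ideal [seq 'X_j | j <- enum V]) -> (#|V| <= size gs)%N.
Proof.
move=> hgen.
have hg0 : forall g, g \in gs -> g@_0%MM = 0.
  move=> g /in_ideal_gen /hgen /in_idealP h; apply: memN_msupp_eq0; apply/negP => /h.
  by move/hasP => [j _]; rewrite lep1mP mnm0E eqxx.
have hex : forall j : 'I_#|V|, exists cs : seq S, size cs = size gs /\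
    'X_(enum_val j) = \sum_(t < size gs) cs`_t * gs`_t.
  move=> j; apply/hgen; apply: in_ideal_gen; apply: map_f; rewrite mem_enum; exact: enum_valP.
have [cs hcs] := fin_all_exists hex.
pose A := \matrix_(j < #|V|, t < size gs) ((cs j)`_t)@_0%MM.
pose B := \matrix_(t < size gs, j < #|V|) (gs`_t)@_(U_(enum_val j)).
have hAB : A *m B = 1%:M.
  apply/matrixP => j j'; rewrite !mxE.
  have -> : \sum_t A j t * B t j' = ('X_(enum_val j) : S)@_(U_(enum_val j')).
    rewrite (proj2 (hcs j)) raddf_sum /=; apply: eq_bigr => t _.
    by rewrite !mxE mcoeffMU // hg0 // mem_nth.
  rewrite mcoeffXU.
  by case: (j =P j') => [->|ne]; [rewrite eqxx | case: eqP => // /enum_val_inj e; case: ne].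
have := mxrankM_maxl A B; rewrite hAB mxrank1 => h.
exact: leq_trans h (rank_leq_col A).
Qed.

End LA.

End M_E.
Import M_E.

Module M_D.
Set Implicit Arguments. Unset Strict Implicit. Unset Printing Implicit Defensive.
Import GRing.Theory.
Local Open Scope ring_scope.

Section Main2.
Variables (K : fieldType) (n s k : nat) (F : 'I_s -> {set 'I_n}) (fs : seq 'X_{1..n}).
Hypothesis hk : (1 < k)%N.
Hypothesis hcard : forall i, #|F i| = k.
Hypothesis hdis : forall i j, i != j -> [disjoint F i & F j].
Hypothesis hsort : sorted (@lex_gt n) fs.
Hypothesis hfs : forall m, m \in fs <-> min_monomial_gen (@prod_ideal K n s (fun i => @PF K n (F i))) m.

Lemma hfsT m : m \in fs <-> isTm F m.
Proof. by rewrite hfs; apply: mingenP. Qed.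

Lemma cardfam : #|[pred a : {ffun 'I_s -> 'I_n} | [forall i, a i \in F i]]| = (k ^ s)%N.
Proof.
have H := card_family (fun i : 'I_s => [pred j : 'I_n | j \in F i]).
rewrite (eq_card (B := family (fun i : 'I_s => [pred j : 'I_n | j \in F i]))); last first.
  by move=> a; rewrite !inE.
rewrite H.
have -> : [seq #|[pred j : 'I_n | j \in F x]| | x : 'I_s] = nseq s k.
  rewrite /image_mem (eq_map (g := fun _ => k)); last by move=> x; rewrite -(hcard x); apply: eq_card.
  match goal with |- ?l = _ => have h : all (pred1 k) l end.
    by apply/allP => x /mapP [y _ ->] /=.
  by rewrite (all_pred1P _ _ h) size_map -cardE card_ord.
by elim: (s) => //= s0 ->; rewrite expnS.
Qed.

Lemma size_fs : size fs = (k ^ s)%N.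
Proof.
pose P := [pred a : {ffun 'I_s -> 'I_n} | [forall i, a i \in F i]].
pose T := [seq mono (fun i => (a : {ffun 'I_s -> 'I_n}) i) | a <- enum P].
have uT : uniq T.
  rewrite map_inj_in_uniq ?enum_uniq // => a b.
  rewrite !mem_enum !inE => /forallP ha /forallP hb e.
  apply/ffunP => i.
  have : mono (fun i => b i) (a i) != 0%N.
    rewrite -e (monoE hdis) //.
    suff -> : [exists i0, a i0 == a i] by []. by apply/existsP; exists i.
  rewrite (monoE hdis) //; case: existsP => [[i' /eqP e']|] //= _.
  by rewrite -e' (Funiq hdis (ha i) (_ : a i \in F i')) // -e'.
have hfsu : uniq fs := sorted_uniq (@lex_gt_trans n) (@lex_gt_irr n) hsort.
have hmem : fs =i T.
  move=> m; apply/idP/idP.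
    move/hfsT => [a [ha ->]]; apply/mapP; exists [ffun i => a i].
      by rewrite mem_enum inE; apply/forallP => i; rewrite ffunE.
    apply/mnmP => l; rewrite !(monoE hdis) //; last by move=> i; rewrite ffunE.
    by congr nat_of_bool; apply: eq_existsb => i; rewrite ffunE.
  move/mapP => [a]; rewrite mem_enum inE => /forallP ha ->; apply/hfsT.
  by exists (fun i => a i).
by rewrite (perm_size (uniq_perm hfsu uT hmem)) size_map -cardE cardfam.
Qed.

Definition Vset (a : 'I_s -> 'I_n) : {set 'I_n} :=
  [set j | [exists i0, (j \in F i0) && (j < a i0)%N]].

Lemma sorted_lt p q : (p < q)%N -> (q < size fs)%N -> lex_gt (nth 0%MM fs p) (nth 0%MM fs q).
Proof.
move=> hpq hq; apply: (sorted_ltn_nth (@lex_gt_trans n) 0%MM hsort) => //.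
by rewrite inE (ltn_trans hpq hq).
Qed.

Lemma lex_pos p q : (p < size fs)%N -> (q < size fs)%N ->
  lex_gt (nth 0%MM fs p) (nth 0%MM fs q) -> (p < q)%N.
Proof.
move=> hp hq hl; case: (ltngtP p q) => // h.
  have := lex_gt_trans hl (sorted_lt h hp); by rewrite lex_gt_irr.
by move: hl; rewrite h lex_gt_irr.
Qed.

Lemma monoA a i : (forall i, a i \in F i) -> mono a (a i) = 1%N.
Proof.
move=> ha; rewrite (monoE hdis) //.
suff -> : [exists i0, a i0 == a i] by []. by apply/existsP; exists i.
Qed.

Lemma mono0 a l : (forall i, a i \in F i) -> (mono a l == 0%N) = ~~ [exists i, a i == l].
Proof. by move=> ha; rewrite (monoE hdis) //; case: existsP. Qed.

Lemma ML i (al : 'I_s -> 'I_n) m' : (1 <= i <= size fs)%N -> (forall i, al i \in F i) ->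
  nth 0%MM fs i.-1 = mono al ->
  has (fun j => nth 0%MM fs j.-1 <= mono al + m')%MM (iota 1 i.-1) =
  has (fun j => U_(j) <= m')%MM (enum (Vset al)).
Proof.
move=> /andP [hi1 hi2] ha hai.
have hi : (i.-1 < size fs)%N by rewrite prednK.
apply/hasP/hasP.
  move=> [j]; rewrite mem_iota => /andP [hj1 hj2] hle.
  have hp : (j.-1 < i.-1)%N by rewrite -ltnS prednK // -(add1n i.-1).
  have hps : (j.-1 < size fs)%N by apply: ltn_trans hp hi.
  have /hfsT [b [hb hu]] := mem_nth 0%MM hps.
  have := sorted_lt hp hi; rewrite hu hai => /existsP [l /andP [hl1 /forallP hl2]].
  have [i0 hi0] : exists i0, b i0 == l.
    apply/existsP; move: hl1; rewrite (monoE hdis l hb); by case: existsP.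
  have hal : mono al l = 0%N by move: hl1; rewrite (monoE hdis l hb) (monoE hdis l ha); case: existsP; case: existsP.
  have hlt : (l < al i0)%N.
    case: (ltngtP l (al i0)) => // h.
      have := hl2 (al i0); rewrite h /= monoA // => /eqP e.
      have : mono b (al i0) != 0%N by rewrite e.
      rewrite mono0 // negbK => /existsP [i' /eqP ei'].
      have ei : i' = i0 by apply: (Funiq hdis (hb i')); rewrite ei'.
      by move: h; rewrite -ei' ei (eqP hi0) ltnn.
    have el : l = al i0 by apply: val_inj.
    by move: hal; rewrite el monoA.
  exists l.
    rewrite mem_enum inE; apply/existsP; exists i0; rewrite hlt andbT.
    by rewrite -(eqP hi0).
  rewrite lep1mP; have := mnm_lepP hle l; rewrite hu mnmDE hal.
  have := hl1; rewrite hal; case: (mono b l) => // ? _; by case: (m' l).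
move=> [l]; rewrite mem_enum inE => /existsP [i0 /andP [hli0 hlt]].
rewrite lep1mP => hml.
pose b := swap al i0 l.
have hb : forall i, b i \in F i by apply: swapF.
have hTu : isTm F (mono b) by exists b.
have /hfsT hu := hTu.
set p := index (mono b) fs.
have hp : (p < size fs)%N by rewrite index_mem.
have hnp : nth 0%MM fs p = mono b by rewrite nth_index.
have hal : mono al l = 0%N.
  apply/eqP; rewrite mono0 //; apply/existsP => -[i1 /eqP e].
  have ei : i1 = i0 by apply: (Funiq hdis (ha i1)); rewrite e.
  by move: hlt; rewrite -e ei ltnn.
have hlex : lex_gt (mono b) (mono al).
  apply/existsP; exists l; rewrite hal /b (swapE hdis) // eqxx /=.
  apply/forallP => l'; apply/implyP => hl'.
  rewrite (swapE hdis) //.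
  have -> : (l' == l) = false by rewrite -val_eqE (ltn_eqF hl').
  rewrite /=.
  have -> : (l' != al i0) by rewrite neq_ltn (ltn_trans hl' hlt).
  by rewrite (monoE hdis).
have hpi : (p < i.-1)%N by apply: lex_pos => //; rewrite hnp hai.
exists p.+1.
  by rewrite mem_iota /= add1n ltnS hpi.
rewrite /= hnp; apply/mnm_lepP => l'; rewrite mnmDE /b (swapE hdis) //.
case: (l' =P l) => [->|_] /=.
  by rewrite hal add0n lt0n.
rewrite (monoE hdis l' ha); apply: leq_trans (leq_addr _ _); by case: (l' != al i0); case: existsP.
Qed.

Lemma colonP i (al : 'I_s -> 'I_n) (p : {mpoly K[n]}) : (1 <= i <= size fs)%N ->
  (forall i, al i \in F i) -> nth 0%MM fs i.-1 = mono al ->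
  (in_ideal [seq 'X_[nth 0%MM fs j.-1] | j <- iota 1 i.-1] (p * 'X_[nth 0%MM fs i.-1])
   <-> in_ideal [seq 'X_j | j <- enum (Vset al)] p).
Proof.
move=> hi ha hai.
rewrite (in_idealP (fun j => nth 0%MM fs j.-1)) (in_idealP (fun j : 'I_n => U_(j)%MM)) hai.
split.
  move=> h m' hm'; rewrite -(ML _ hi ha hai); apply: h.
  by rewrite (perm_mem (msuppMX _ _)); apply: map_f.
move=> h m; rewrite (perm_mem (msuppMX _ _)) => /mapP [m' hm' ->].
by rewrite (ML _ hi ha hai); apply: h.
Qed.

Lemma cardU (al : 'I_s -> 'I_n) : (forall i, al i \in F i) ->
  #|\bigcup_i (F i :\ al i)| = ((k - 1) * s)%N.
Proof.
move=> ha.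
have := @partition_disjoint_bigcup _ _ _ 0%N addn (fun i => F i :\ al i) (fun _ => 1%N).
rewrite sum1_card => ->; last first.
  move=> i j /hdis hd; apply: disjointWl (subsetDl _ _) _.
  rewrite disjoint_sym; apply: disjointWl (subsetDl _ _) _; by rewrite disjoint_sym.
rewrite (eq_bigr (fun _ => (k - 1)%N)); last first.
  move=> i _; rewrite sum1_card; have := cardsD1 (al i) (F i); rewrite ha hcard add1n => ->.
  by rewrite subn1.
by rewrite sum_nat_const card_ord mulnC.
Qed.

Lemma Vsub (al : 'I_s -> 'I_n) : Vset al \subset \bigcup_i (F i :\ al i).
Proof.
apply/subsetP => j; rewrite inE => /existsP [i0 /andP [hj hlt]].
apply/bigcupP; exists i0 => //; rewrite !inE hj andbT.
by apply/eqP => e; move: hlt; rewrite e ltnn.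
Qed.

Lemma Vcard (al : 'I_s -> 'I_n) : (forall i, al i \in F i) -> (#|Vset al| <= (k - 1) * s)%N.
Proof. by move=> ha; rewrite -(cardU ha); apply: subset_leq_card; apply: Vsub. Qed.

Lemma Vlast (al : 'I_s -> 'I_n) : (0 < size fs)%N -> (forall i, al i \in F i) ->
  nth 0%MM fs (size fs).-1 = mono al -> Vset al = \bigcup_i (F i :\ al i).
Proof.
move=> hs ha hai; apply/eqP; rewrite eqEsubset Vsub /=.
apply/subsetP => j /bigcupP [i0 _]; rewrite !inE => /andP [hne hj].
apply/existsP; exists i0; rewrite hj /=.
case: (ltngtP j (al i0)) => // h; last by move: hne; rewrite (val_inj h) eqxx.
exfalso.
pose b := swap al i0 j.
have hb : forall i, b i \in F i by apply: swapF.
have /hfsT hu : isTm F (mono b) by exists b.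
set p := index (mono b) fs.
have hp : (p < size fs)%N by rewrite index_mem.
have hnp : nth 0%MM fs p = mono b by rewrite nth_index.
have hlex : lex_gt (mono al) (mono b).
  apply/existsP; exists (al i0); rewrite monoA // /b (swapE hdis) //.
  have -> : (al i0 == j) = false by rewrite -val_eqE (ltn_eqF h).
  rewrite eqxx /=.
  apply/forallP => l'; apply/implyP => hl'.
  rewrite (swapE hdis) //.
  have -> : (l' == j) = false by rewrite -val_eqE (ltn_eqF (ltn_trans hl' h)).
  have -> : (l' != al i0) by rewrite neq_ltn hl'.
  by rewrite (monoE hdis).
have hps : ((size fs).-1 < size fs)%N by rewrite prednK.
have := lex_pos hps hp; rewrite hnp hai => /(_ hlex).
by rewrite ltnNge -ltnS prednK // hp.
Qed.

End Main2.

End M_D.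
Import M_D.

Unset Implicit Arguments. Set Strict Implicit. Set Printing Implicit Defensive.
Local Open Scope ring_scope.

Theorem lemma3p1 (K : fieldType) (n s k : nat) (F : 'I_s -> {set 'I_n})
    (fs : seq 'X_{1..n}) :
  (1 < k)%N ->
  (forall i, #|F i| = k) ->
  (forall i j, i != j -> [disjoint F i & F j]) ->
  (* f_1, ..., f_N are exactly the minimal monomial generators of
     P_{F_1} ... P_{F_s}, listed in strictly decreasing lex order *)
  sorted (@lex_gt n) fs ->
  (forall m, m \in fs <-> min_monomial_gen (@prod_ideal K n s (fun i => @PF K n (F i))) m) ->
  let f := fun i : nat => ('X_[nth 0%MM fs i.-1] : {mpoly K[n]}) in
  let C := fun i : nat => colon (in_ideal [seq f j | j <- iota 1 i.-1]) (f i) in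
  [/\ size fs = (k ^ s)%N,
      (forall i, (2 <= i <= size fs)%N ->
         forall ni, min_num_homog_gens (C i) ni -> (ni <= (k - 1) * s)%N),
      min_num_homog_gens (C (size fs)) ((k - 1) * s)%N
    & forall i, (1 <= i <= size fs)%N -> gen_by_linear_forms (C i)].
Proof.
move=> hk hcard hdis hsort hfs f C.
have hsz := size_fs hcard hdis hsort hfs.
have hgen : forall i, (1 <= i <= size fs)%N -> exists al : 'I_s -> 'I_n,
    [/\ forall i0, al i0 \in F i0, nth 0%MM fs i.-1 = mono al &
        generates [seq 'X_j | j <- enum (Vset F al)] (C i)].
  move=> i hi.
  have hi' : (i.-1 < size fs)%N.
    by case/andP: hi => h1 h2; rewrite prednK.
  have /(hfsT hdis hfs) [al [ha hal]] := mem_nth 0%MM hi'.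
  exists al; split => // p.
  exact: (colonP hdis hsort hfs p hi ha hal).
have hhom : forall V : {set 'I_n}, forall g, g \in [seq ('X_j : {mpoly K[n]}) | j <- enum V] ->
    g \is 1.-homog.
  by move=> V g /mapP [j _ ->]; rewrite dhomogX; apply/eqP; apply: mdeg1.
have hpos : (0 < size fs)%N by rewrite hsz expn_gt0 (ltn_trans _ hk).
split => //.
- move=> i /andP [h2 hi] ni [_ hmin].
  have hi1 : (1 <= i <= size fs)%N by rewrite hi andbT (ltn_trans _ h2).
  have [al [ha hal hg]] := hgen i hi1.
  apply: leq_trans (hmin _ _ hg) _.
    by move=> g /hhom hg'; exists 1%N.
  by rewrite size_map -cardE (Vcard hcard hdis ha).
- have hi1 : (1 <= size fs <= size fs)%N by rewrite hpos leqnn.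
  have [al [ha hal hg]] := hgen _ hi1.
  have hV : #|Vset F al| = ((k - 1) * s)%N.
    by rewrite (Vlast hdis hsort hfs hpos ha hal) (cardU hcard hdis ha).
  split.
    exists [seq 'X_j | j <- enum (Vset F al)]; split; first by rewrite size_map -cardE.
    by split; [move=> g /hhom hg'; exists 1%N | exact: hg].
  move=> gs _ hgs; rewrite -hV; apply: LA => p.
  by rewrite -hg hgs.
- move=> i hi; have [al [ha hal hg]] := hgen i hi.
  by exists [seq 'X_j | j <- enum (Vset F al)]; split => //; apply: hhom.
Qed.
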